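(* Let $A_h,B\in\mathcal L(\mathbb R^{N\times N}_s)$ be symmetric positive tensors and $\gamma>0$ such that $\gamma A_h-B$ is positive. Let $S(t)=-Be^{-\gamma t}$, $t\geq0$, and $LS(z)=\int_0^\infty e^{-zt}S(t)dt$ its Laplace transform. Then there exists $c>0$ such that for all $z\in\mathbb C$ with $\mathrm{Re}(z)>0$ and all $\xi\in\mathbb C^{N\times N}_s$, $$\mathrm{Re}\big((A_h+LS(z))\xi:\overline{z\xi}\big)\geq c\Big(\mathrm{Re}(z)+\frac{|z|^2}{1+|z|^2}\Big)|\xi|^2,\qquad \mathrm{Im}\big((A_h+LS(z))\xi:\overline{z\xi}\big)\,\mathrm{Im}(z)\leq-c|\mathrm{Im}(z)|^2|\xi|^2.$$
   Context: $\xi:\eta=\sum_{ij}\xi_{ij}\eta_{ij}$ (bilinear, no conjugation); $\mathbb C^{N\times N}_s$ denotes complex symmetric matrices and tensors in $\mathcal L(\mathbb R^{N\times N}_s)$ are extended complex-linearly. A tensor $M$ is positive if $M\xi:\xi>0$ for $\xi\neq0$ real symmetric. *)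

(* Defs.v *)
From HB Require Import structures.
From mathcomp Require Import all_boot all_order all_algebra.
From mathcomp Require Import all_classical all_reals all_analysis.
From mathcomp Require Import complex.
Set Implicit Arguments. Unset Strict Implicit. Unset Printing Implicit Defensive.
Import Order.TTheory GRing.Theory Num.Theory.
Local Open Scope ring_scope.

Section Defs.
Variables (R : realType) (N : nat).
Local Notation C := R[i].

Definition tensor (K : Type) := 'I_N -> 'I_N -> 'I_N -> 'I_N -> K.

Definition tapply (K : pzRingType) (M : tensor K) (xi : 'M[K]_N) : 'M[K]_N :=
  \matrix_(i, j) \sum_(k < N) \sum_(l < N) M i j k l * xi k l.

(* bilinear double contraction xi : eta = \sum_{ij} xi_ij eta_ij (no conjugation) *)
Definition ddot (K : pzRingType) (xi eta : 'M[K]_N) : K :=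
  \sum_(i < N) \sum_(j < N) xi i j * eta i j.

Definition symmx (K : Type) (xi : 'M[K]_N) : Prop := xi^T = xi.

Definition sym_tensor (M : tensor R) : Prop :=
  forall xi eta : 'M[R]_N, symmx xi -> symmx eta ->
    ddot (tapply M xi) eta = ddot xi (tapply M eta).

Definition pos_tensor (M : tensor R) : Prop :=
  forall xi : 'M[R]_N, symmx xi -> xi != 0 -> 0 < ddot (tapply M xi) xi.

Definition tensorC (M : tensor R) : tensor C :=
  fun i j k l => (M i j k l)%:C%C.

Definition mxconjC (xi : 'M[C]_N) : 'M[C]_N :=
  \matrix_(i, j) ((complex.Re (xi i j)) -i* (complex.Im (xi i j)))%C.

Definition fnorm2 (xi : 'M[C]_N) : R :=
  \sum_(i < N) \sum_(j < N) (complex.Re (xi i j) ^+ 2 + complex.Im (xi i j) ^+ 2).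

End Defs.

(* Laplace transform of a real function f : [0,oo) -> R at z in C:
   Lf(z) = \int_0^oo e^{-zt} f(t) dt, with
   e^{-zt} = e^{-Re z t} (cos (Im z t) - i sin (Im z t)). *)
Definition laplace (R : realType) (f : R -> R) (z : R[i]) : R[i] :=
  ((Rintegral (@lebesgue_measure R) `[0%R, +oo[%classic
      (fun t => expR (- complex.Re z * t) * cos (complex.Im z * t) * f t))
   +i*
   (- Rintegral (@lebesgue_measure R) `[0%R, +oo[%classic
      (fun t => expR (- complex.Re z * t) * sin (complex.Im z * t) * f t)))%C.

Definition laplace_tensor (R : realType) (N : nat)
  (S : R -> tensor N R) (z : R[i]) : tensor N R[i] :=
  fun i j k l => laplace (fun t => S t i j k l) z.

(* Main.v *)
Require Import Defs.
From HB Require Import structures.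
From mathcomp Require Import all_boot all_order all_algebra.
From mathcomp Require Import all_classical all_reals all_analysis.
From mathcomp Require Import complex.
From mathcomp Require Import measurable_realfun.
From mathcomp Require Import ring lra.
Import Order.TTheory GRing.Theory Num.Theory.
Local Open Scope ring_scope.
Import numFieldNormedType.Exports.
Local Open Scope classical_set_scope.
Section L.
Variable R : realType.
Local Notation mu := (@lebesgue_measure R).
About is_derive_eq.
Lemma dlin (s x : R) : is_derive x (1:R) (fun t : R => s * t) s.
Proof.
have h := @is_deriveZ R R R id s x 1 1 (is_derive_id x 1).
have -> : (fun t : R => s * t) = s \*: id by apply/funext => t.
apply: (is_derive_eq h). exact: mulr1.
Qed.
Lemma dE (s x : R) : is_derive x (1:R) (fun t => expR (s * t)) (s * expR (s * x)).
Proof.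
have h := is_derive1_comp (is_derive_expR (s * x)) (dlin s x).
have -> : (fun t => expR (s * t)) = expR \o ( *%R s) by apply/funext.
apply: (is_derive_eq h).
by rewrite mulrC.
Qed.
Lemma dC (s x : R) : is_derive x (1:R) (fun t => cos (s * t)) (- s * sin (s * x)).
Proof.
have h := is_derive1_comp (is_derive_cos (s * x)) (dlin s x).
have -> : (fun t => cos (s * t)) = cos \o ( *%R s) by apply/funext.
apply: (is_derive_eq h).
by rewrite mulrC mulNr mulrN.
Qed.
Lemma dS (s x : R) : is_derive x (1:R) (fun t => sin (s * t)) (s * cos (s * x)).
Proof.
have h := is_derive1_comp (is_derive_sin (s * x)) (dlin s x).
have -> : (fun t => sin (s * t)) = sin \o ( *%R s) by apply/funext.
apply: (is_derive_eq h).
by rewrite mulrC.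
Qed.
Lemma is_derive_ext' (f g : R -> R) (x d d' : R) : (forall t, f t = g t) ->
  is_derive x (1:R) f d -> d = d' -> is_derive x (1:R) g d'.
Proof.
move=> fg h dd; have -> : g = f by apply/funext => t; rewrite fg.
by rewrite -dd.
Qed.

Lemma dFc (b s y D x : R) :
  is_derive x (1:R) (fun t => b / D * (expR (- s * t) * (y * sin (y * t) - s * cos (y * t))))
   (b / D * (expR (- s * x) * cos (y * x) * (s ^+ 2 + y ^+ 2))).
Proof.
have h1 := is_deriveB (is_deriveZ y (dS y x)) (is_deriveZ s (dC y x)).
have h2 := is_deriveM (dE (- s) x) h1.
have h3 := is_deriveZ (b / D) h2.
apply: (@is_derive_ext' _ _ _ _ _ _ h3) => [t /=|]; first by [].
rewrite /GRing.scale /=. rewrite -[X in X * (- s * _)]/(y * sin (y * x) - s * cos (y * x)). ring.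
Qed.

Lemma dFs (b s y D x : R) :
  is_derive x (1:R) (fun t => b / D * (expR (- s * t) * (y * cos (y * t) + s * sin (y * t))))
   (- (b / D * (expR (- s * x) * sin (y * x) * (s ^+ 2 + y ^+ 2)))).
Proof.
have h1 := is_deriveD (is_deriveZ y (dC y x)) (is_deriveZ s (dS y x)).
have h2 := is_deriveM (dE (- s) x) h1.
have h3 := is_deriveZ (b / D) h2.
apply: (@is_derive_ext' _ _ _ _ _ _ h3) => [t /=|]; first by [].
rewrite /GRing.scale /=. rewrite -[X in X * (- s * _)]/(y * cos (y * x) + s * sin (y * x)). ring.
Qed.

Lemma dG (c s x : R) : is_derive x (1:R) (fun t => c * expR (- s * t)) (c * (- s * expR (- s * x))).
Proof.
have h3 := is_deriveZ c (dE (- s) x).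
by apply: (@is_derive_ext' _ _ _ _ _ _ h3) => [t /=|].
Qed.

Lemma cvg_E (s : R) : 0 < s -> (expR (- s * t)) @[t --> +oo] --> (0:R).
Proof.
move=> s0.
  rewrite (_ : (fun t => expR (- s * t)) = (fun z => expR (- z)) \o (fun z => s * z)); last first.
    by apply: funext => x; rewrite /= mulNr.
  apply: (@cvg_comp _ _ _ _ _ _ (pinfty_nbhs R)); last exact: cvgr_expR.
  exact: gt0_cvgMry.
Qed.

Lemma cvg_Eb (s K : R) (h : R -> R) : 0 < s -> (forall t, `|h t| <= K) ->
  (expR (- s * t) * h t) @[t --> +oo] --> (0:R).
Proof.
move=> s0 hK.
have E0 := @cvg_E s s0.
have KE : (K * expR (- s * t)) @[t --> +oo] --> (0:R).
  by rewrite -(mulr0 K); apply: cvgMr.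
apply: (@squeeze_cvgr _ _ _ _ (fun t => - (K * expR (- s * t))) (fun t => K * expR (- s * t))).
- apply: nearW => t; have := hK t; rewrite ler_norml => /andP[h1 h2].
  have e0 : 0 < expR (- s * t) by apply: expR_gt0.
  apply/andP; split; nra.
- by rewrite -oppr0; apply: cvgN.
- exact: KE.
Qed.
Lemma FTC2y_signed (f g F G : R -> R) (l m : R) :
  (forall x, 0 <= x -> 0 <= g x) -> (forall x, 0 <= x -> 0 <= f x + g x) ->
  continuous f -> continuous g ->
  F x @[x --> +oo] --> l -> G x @[x --> +oo] --> m ->
  (forall x : R, is_derive x (1:R) F (f x)) -> (forall x : R, is_derive x (1:R) G (g x)) ->
  Rintegral mu `[0%R, +oo[ f = l - F 0.
Proof.
move=> g0 fg0 cf cg Fl Gm dF dG.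
have cfg : continuous (f \+ g) by move=> x; apply: cvgD; [exact: cf|exact: cg].
have dFG (x : R) : is_derive x (1:R) (F \+ G) (f x + g x) by apply: is_deriveD.
have cF : continuous F.
  move=> x; apply: differentiable_continuous; apply/derivable1_diffP; exact: ex_derive.
have cG : continuous G.
  move=> x; apply: differentiable_continuous; apply/derivable1_diffP; exact: ex_derive.
have h1 : (\int[mu]_(x in `[0%R, +oo[) ((f x + g x)%:E) = (l + m)%:E - (F 0 + G 0)%:E)%E.
  apply: (@ge0_continuous_FTC2y _ (f \+ g) (F \+ G)).
  - by move=> x x0; exact: fg0.
  - exact: continuous_subspaceT.
  - exact: cvgD.
  - by move=> x _; apply: ex_derive.
  - by apply: cvg_at_right_filter; apply: cvgD; [exact: cF|exact: cG].
  - by move=> x _; rewrite derive1E; apply: derive_val.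
have h2 : (\int[mu]_(x in `[0%R, +oo[) ((g x)%:E) = m%:E - (G 0)%:E)%E.
  apply: (@ge0_continuous_FTC2y _ g G).
  - by move=> x x0; exact: g0.
  - exact: continuous_subspaceT.
  - exact: Gm.
  - by move=> x _; apply: ex_derive.
  - by apply: cvg_at_right_filter; apply: cG.
  - by move=> x _; rewrite derive1E; apply: derive_val.
have mI : measurable (`[0%R, +oo[ : set R) by [].
have ifg : mu.-integrable `[0%R, +oo[ (EFin \o (f \+ g)).
  apply/integrableP; split.
    by apply/measurable_EFinP; apply: measurable_funTS; exact: continuous_measurable_fun.
  rewrite (@eq_integral _ _ _ mu _ (fun x => ((f x + g x)%R)%:E)); last first.
    move=> x; rewrite inE /= in_itv /= andbT => x0.
    by rewrite ger0_norm // fg0.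
  by rewrite h1 ltry.
have ig : mu.-integrable `[0%R, +oo[ (EFin \o g).
  apply/integrableP; split.
    by apply/measurable_EFinP; apply: measurable_funTS; exact: continuous_measurable_fun.
  rewrite (@eq_integral _ _ _ mu _ (fun x => (g x)%:E)); last first.
    move=> x; rewrite inE /= in_itv /= andbT => x0.
    by rewrite ger0_norm // g0.
  by rewrite h2 ltry.
have -> : f = (fun x => (f \+ g) x - g x) by apply: funext => x /=; rewrite addrK.
rewrite RintegralB //.
rewrite /Rintegral h1 h2 /=.
lra.
Qed.

Lemma der_cont (f : R -> R) : (forall x, exists d, is_derive x (1:R) f d) -> continuous f.
Proof.
move=> h x; have [d hd] := h x.
apply: differentiable_continuous; apply/derivable1_diffP; exact: ex_derive.
Qed.

Lemma cont_EC (b s y : R) : continuous (fun t => b * (expR (- s * t) * cos (y * t))).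
Proof.
apply: der_cont => x.
have h3 := is_deriveZ b (is_deriveM (dE (- s) x) (dC y x)).
eexists; apply: (@is_derive_ext' _ _ _ _ _ _ h3) => [t /=|]; first by [].
reflexivity.
Qed.

Lemma cont_ES (b s y : R) : continuous (fun t => b * (expR (- s * t) * sin (y * t))).
Proof.
apply: der_cont => x.
have h3 := is_deriveZ b (is_deriveM (dE (- s) x) (dS y x)).
eexists; apply: (@is_derive_ext' _ _ _ _ _ _ h3) => [t /=|]; first by [].
reflexivity.
Qed.

Lemma cont_E (b s : R) : continuous (fun t => b * expR (- s * t)).
Proof.
apply: der_cont => x; eexists; exact: dG.
Qed.

Lemma trig_bound (p q u v : R) : `|p * sin u + q * cos v| <= `|p| + `|q|.
Proof.
rewrite (le_trans (ler_normD _ _)) // !normrM; apply: lerD;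
  rewrite -[X in _ <= X]mulr1; apply: ler_wpM2l => //; [exact: sin_max|exact: cos_max].
Qed.

Lemma int_cos (b s y : R) : 0 < s ->
  Rintegral mu `[0%R, +oo[ (fun t => b * (expR (- s * t) * cos (y * t))) = b * s / (s ^+ 2 + y ^+ 2).
Proof.
move=> s0.
set D := s ^+ 2 + y ^+ 2.
have D0 : 0 < D by rewrite /D; nra.
have -> : b * s / D = 0 - b / D * (expR (- s * 0) * (y * sin (y * 0) - s * cos (y * 0))).
  by rewrite !mulr0 expR0 sin0 cos0; field; rewrite gt_eqF.
apply: (@FTC2y_signed _ (fun t => `|b| * expR (- s * t)) (fun t => b / D * (expR (- s * t) * (y * sin (y * t) - s * cos (y * t)))) (fun t => (- (`|b| / s)) * expR (- s * t)) _ 0).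
- by move=> x _; rewrite mulr_ge0 // expR_ge0.
- move=> x _.
  have := cos_le1 (y * x); have := cos_geN1 (y * x); have := expR_gt0 (- s * x).
  move=> e0 c1 c2.
  have -> : b * (expR (- s * x) * cos (y * x)) + `|b| * expR (- s * x) = expR (- s * x) * (b * cos (y * x) + `|b|) by ring.
  apply: mulr_ge0; first exact: ltW.
  case: (lerP 0 b) => hb; [rewrite ger0_norm // | rewrite ltr0_norm //]; nra.
- exact: cont_EC.
- exact: cont_E.
- rewrite (_ : (fun t => _) = (fun t => expR (- s * t) * (b / D * (y * sin (y * t) - s * cos (y * t))))); last first.
    by apply: funext => t; ring.
  apply: (@cvg_Eb s (`|b / D| * (`|y| + `|s|))) => // t.
  rewrite normrM; apply: ler_wpM2l => //.
  by rewrite -(normrN s) -mulNr; apply: trig_bound.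
- rewrite -(mulr0 (- (`|b| / s))); apply: cvgMr.
  exact: cvg_E.
- move=> x; apply: (is_derive_eq (dFc b s y D x)).
  rewrite -/D; field; by rewrite gt_eqF.
- move=> x; apply: (is_derive_eq (dG _ s x)).
  field; by rewrite gt_eqF.
Qed.
Lemma int_sin (b s y : R) : 0 < s ->
  Rintegral mu `[0%R, +oo[ (fun t => b * (expR (- s * t) * sin (y * t))) = b * y / (s ^+ 2 + y ^+ 2).
Proof.
move=> s0.
set D := s ^+ 2 + y ^+ 2.
have D0 : 0 < D by rewrite /D; nra.
have -> : b * y / D = 0 - (- b) / D * (expR (- s * 0) * (y * cos (y * 0) + s * sin (y * 0))).
  by rewrite !mulr0 expR0 sin0 cos0; field; rewrite gt_eqF.
apply: (@FTC2y_signed _ (fun t => `|b| * expR (- s * t)) (fun t => (- b) / D * (expR (- s * t) * (y * cos (y * t) + s * sin (y * t)))) (fun t => (- (`|b| / s)) * expR (- s * t)) _ 0).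
- by move=> x _; rewrite mulr_ge0 // expR_ge0.
- move=> x _.
  have := sin_le1 (y * x); have := sin_geN1 (y * x); have := expR_gt0 (- s * x).
  move=> e0 c1 c2.
  have -> : b * (expR (- s * x) * sin (y * x)) + `|b| * expR (- s * x) = expR (- s * x) * (b * sin (y * x) + `|b|) by ring.
  apply: mulr_ge0; first exact: ltW.
  case: (lerP 0 b) => hb; [rewrite ger0_norm // | rewrite ltr0_norm //]; nra.
- exact: cont_ES.
- exact: cont_E.
- rewrite (_ : (fun t => _) = (fun t => expR (- s * t) * ((- b) / D * (s * sin (y * t) + y * cos (y * t))))); last first.
    by apply: funext => t; ring.
  apply: (@cvg_Eb s (`|(- b) / D| * (`|s| + `|y|))) => // t.
  rewrite normrM; apply: ler_wpM2l => //.
  by apply: trig_bound.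
- rewrite -(mulr0 (- (`|b| / s))); apply: cvgMr.
  exact: cvg_E.
- move=> x; apply: (is_derive_eq (dFs (- b) s y D x)).
  rewrite -/D; field; by rewrite gt_eqF.
- move=> x; apply: (is_derive_eq (dG _ s x)).
  field; by rewrite gt_eqF.
Qed.
Lemma laplace_S (b g : R) (z : R[i]) : 0 < complex.Re z -> 0 < g ->
  laplace (fun t => - b * expR (- g * t)) z =
  ((- b) * ((complex.Re z + g) / ((complex.Re z + g) ^+ 2 + complex.Im z ^+ 2)) +i*
   ((- b) * (- complex.Im z / ((complex.Re z + g) ^+ 2 + complex.Im z ^+ 2))))%C.
Proof.
move=> x0 g0; rewrite /laplace.
have s0 : 0 < complex.Re z + g by rewrite addr_gt0.
rewrite (_ : (fun t => _ * cos _ * _) = (fun t => (- b) * (expR (- (complex.Re z + g) * t) * cos (complex.Im z * t)))); last first.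
  apply: funext => t; have -> : - (complex.Re z + g) * t = (- complex.Re z * t) + (- g * t) by ring.
  rewrite expRD; ring.
rewrite (_ : (fun t => _ * sin _ * _) = (fun t => (- b) * (expR (- (complex.Re z + g) * t) * sin (complex.Im z * t)))); last first.
  apply: funext => t; have -> : - (complex.Re z + g) * t = (- complex.Re z * t) + (- g * t) by ring.
  rewrite expRD; ring.
rewrite int_cos // int_sin //.
congr (_ +i* _)%C; ring.
Qed.
Import numFieldNormedType.Exports.
Local Open Scope classical_set_scope.

Definition sq {N : nat} (w : 'M[R]_N) : R := \sum_(i < N) \sum_(j < N) w i j ^+ 2.

Lemma cont_sum (T : topologicalType) (I : Type) (r : seq I) (F : I -> T -> R) :
  (forall i, continuous (F i)) -> continuous (fun v => \sum_(i <- r) F i v).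
Proof.
move=> cF; elim: r => [|a r IH].
  rewrite (_ : (fun v => _) = (fun=> 0)); first exact: cst_continuous.
  by apply: funext => v; rewrite big_nil.
rewrite (_ : (fun v => _) = (fun v => F a v + \sum_(i <- r) F i v)); last first.
  by apply: funext => v; rewrite big_cons.
by move=> v; apply: cvgD; [exact: cF | exact: IH].
Qed.

Lemma cont_mul (T : topologicalType) (f g : T -> R) :
  continuous f -> continuous g -> continuous (fun v => f v * g v).
Proof. by move=> cf cg v; apply: cvgM; [exact: cf | exact: cg]. Qed.

Lemma cont_sub (T : topologicalType) (f g : T -> R) :
  continuous f -> continuous g -> continuous (fun v => f v - g v).
Proof. by move=> cf cg v; apply: cvgB; [exact: cf | exact: cg]. Qed.

Lemma cont_X {N : nat} (i j : 'I_N) : continuous (fun v : 'rV[R]_(N * N) => vec_mx v i j).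
Proof.
rewrite (_ : (fun v => _) = (fun v : 'rV[R]_(N * N) => v ord0 (mxvec_index i j))); last first.
  by apply: funext => v; rewrite mxE.
exact: coord_continuous.
Qed.

Definition qf {N : nat} (M : tensor N R) (w : 'M[R]_N) : R := ddot (tapply M w) w.

Lemma tapplyZ {N : nat} (M : tensor N R) (a : R) (w : 'M[R]_N) :
  tapply M (a *: w) = a *: tapply M w.
Proof.
apply/matrixP => i j; rewrite !mxE mulr_sumr; apply: eq_bigr => k _.
rewrite mulr_sumr; apply: eq_bigr => l _; rewrite !mxE; ring.
Qed.

Lemma ddotZl {N : nat} (a : R) (w w' : 'M[R]_N) : ddot (a *: w) w' = a * ddot w w'.
Proof.
rewrite /ddot mulr_sumr; apply: eq_bigr => i _; rewrite mulr_sumr; apply: eq_bigr => j _.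
by rewrite !mxE mulrA.
Qed.

Lemma ddotC {N : nat} (w w' : 'M[R]_N) : ddot w w' = ddot w' w.
Proof. by rewrite /ddot; apply: eq_bigr => i _; apply: eq_bigr => j _; rewrite mulrC. Qed.

Lemma qfZ {N : nat} (M : tensor N R) (a : R) (w : 'M[R]_N) : qf M (a *: w) = a ^+ 2 * qf M w.
Proof. by rewrite /qf tapplyZ ddotZl ddotC ddotZl ddotC expr2 mulrA. Qed.

Lemma sqZ {N : nat} (a : R) (w : 'M[R]_N) : sq (a *: w) = a ^+ 2 * sq w.
Proof.
rewrite /sq mulr_sumr; apply: eq_bigr => i _; rewrite mulr_sumr; apply: eq_bigr => j _.
by rewrite !mxE exprMn.
Qed.

Lemma sq_ge0 {N : nat} (w : 'M[R]_N) : 0 <= sq w.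
Proof. by apply: sumr_ge0 => i _; apply: sumr_ge0 => j _; apply: sqr_ge0. Qed.

Lemma sq_eq0 {N : nat} (w : 'M[R]_N) : sq w = 0 -> w = 0.
Proof.
move=> /eqP; rewrite psumr_eq0; last by move=> i _; apply: sumr_ge0 => j _; apply: sqr_ge0.
move=> /allP h; apply/matrixP => i j; rewrite mxE.
have := h i (mem_index_enum _).
rewrite /= psumr_eq0; last by move=> k _; apply: sqr_ge0.
move=> /allP h2; have := h2 j (mem_index_enum _).
by rewrite /= sqrf_eq0 => /eqP.
Qed.

Lemma qf_lower {N : nat} (M : tensor N R) : pos_tensor M ->
  exists k, 0 < k /\ forall w : 'M[R]_N, symmx w -> k * sq w <= qf M w.
Proof.
move=> pM.
pose sv (v : 'rV[R]_(N * N)) := \sum_(i < N) \sum_(j < N) (vec_mx v i j - vec_mx v j i) ^+ 2.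
pose A := [set v : 'rV[R]_(N * N) | sq (vec_mx v) = 1 /\ sv v = 0].
pose f (v : 'rV[R]_(N * N)) := qf M (vec_mx v).
have svP v : sv v = 0 -> symmx (vec_mx v).
  move=> h; apply/matrixP => i j; rewrite [LHS]mxE.
  move: h; rewrite /sv => /eqP; rewrite psumr_eq0; last first.
    by move=> k _; apply: sumr_ge0 => l _; apply: sqr_ge0.
  move=> /allP /(_ j (mem_index_enum _)); rewrite /= psumr_eq0; last by move=> l _; apply: sqr_ge0.
  by move=> /allP /(_ i (mem_index_enum _)); rewrite /= sqrf_eq0 subr_eq0 => /eqP ->.
have svS (w : 'M[R]_N) : symmx w -> sv (mxvec w) = 0.
  move=> sw; rewrite /sv mxvecK; apply: big1 => i _; apply: big1 => j _.
  by rewrite -{1}sw mxE subrr expr0n.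
have scale (w : 'M[R]_N) : symmx w -> w != 0 -> A (mxvec ((Num.sqrt (sq w))^-1 *: w)) /\
    f (mxvec ((Num.sqrt (sq w))^-1 *: w)) = qf M w / sq w.
  move=> sw w0.
  have sq0 : 0 < sq w.
    rewrite lt_neqAle sq_ge0 andbT eq_sym; apply/negP => /eqP h.
    by move/eqP: w0; apply; apply: sq_eq0.
  have r0 : 0 < Num.sqrt (sq w) by rewrite sqrtr_gt0.
  have r2 : (Num.sqrt (sq w))^-1 ^+ 2 = (sq w)^-1 by rewrite exprVn sqr_sqrtr // ltW.
  split; [split|].
  - by rewrite mxvecK sqZ r2 mulVf // gt_eqF.
  - apply: svS; rewrite /symmx linearZ /=; congr (_ *: _); exact: sw.
  - by rewrite /f mxvecK qfZ r2 mulrC.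
have [[v0 Av0]|A0] := pselect (A !=set0); last first.
  exists 1; split => // w sw.
  have [->|w0] := eqVneq w 0.
    have := sqZ 0 (0 : 'M[R]_N); have := qfZ M 0 (0 : 'M[R]_N).
    by rewrite scale0r expr0n /= !mul0r => -> ->; rewrite mulr0.
  by exfalso; apply: A0; exists (mxvec ((Num.sqrt (sq w))^-1 *: w)); case: (scale w sw w0).
have csq : continuous (fun v : 'rV[R]_(N * N) => sq (vec_mx v)).
  apply: cont_sum => i; apply: cont_sum => j.
  rewrite (_ : (fun v => _) = (fun v : 'rV[R]_(N * N) => vec_mx v i j * vec_mx v i j)); last first.
    by apply: funext => v; rewrite expr2.
  by apply: cont_mul; apply: cont_X.
have csv : continuous sv.
  apply: cont_sum => i; apply: cont_sum => j.
  rewrite (_ : (fun v => _) = (fun v : 'rV[R]_(N * N) => (vec_mx v i j - vec_mx v j i) * (vec_mx v i j - vec_mx v j i))); last first.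
    by apply: funext => v; rewrite expr2.
  by apply: cont_mul; apply: cont_sub; apply: cont_X.
have cA : compact A.
  apply: (@subclosed_compact _ _ [set v : 'rV[R]_(N * N) | forall i, `[-1, 1]%classic (v ord0 i)]).
  - apply: closedI.
    + apply: (@preimage_closed _ _ (fun v : 'rV[R]_(N * N) => sq (vec_mx v)) [set 1]).
        by move=> x _; apply: csq.
      exact: closed_eq.
    + apply: (@preimage_closed _ _ sv [set 0]).
        by move=> x _; apply: csv.
      exact: closed_eq.
  - have := (@rV_compact R (N * N) (fun=> `[-1, 1]%classic) (fun i => @segment_compact R (-1) 1)). exact.
  - move=> v [sv1 _] k.
    case: (mxvec_indexP k) => i j.
    have -> : v ord0 (mxvec_index i j) = vec_mx v i j by rewrite mxE.
    have : vec_mx v i j ^+ 2 <= 1.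
      rewrite -sv1 /sq (bigD1 i) //= (bigD1 j) //= -addrA lerDl.
      apply: addr_ge0; first by apply: sumr_ge0 => l _; apply: sqr_ge0.
      by apply: sumr_ge0 => l _; apply: sumr_ge0 => l' _; apply: sqr_ge0.
    by rewrite /= in_itv /=; move=> h; apply/andP; split; nra.
have cf : continuous f.
  rewrite (_ : f = (fun v : 'rV[R]_(N * N) => \sum_(i < N) \sum_(j < N)
      ((\sum_(k < N) \sum_(l < N) M i j k l * vec_mx v k l) * vec_mx v i j))); last first.
    by apply: funext => v; rewrite /f /qf /ddot; apply: eq_bigr => i _; apply: eq_bigr => j _; rewrite mxE.
  apply: cont_sum => i; apply: cont_sum => j; apply: cont_mul; last exact: cont_X.
  apply: cont_sum => k; apply: cont_sum => l; apply: cont_mul; last exact: cont_X.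
  exact: cst_continuous.
have [c cA' cmin] := compact_EVT_min (ex_intro _ v0 Av0) cA (continuous_subspaceT cf).
have [sqc svc] : A c by rewrite inE in cA'.
have m0 : 0 < f c.
  apply: pM; first exact: svP.
  apply/negP => /eqP h; move: sqc; rewrite h.
  have := sqZ 0 (0 : 'M[R]_N); rewrite scale0r expr0n /= mul0r => ->.
  by move/eqP; rewrite eq_sym oner_eq0.
exists (f c); split => // w sw.
have [->|w0] := eqVneq w 0.
  have := sqZ 0 (0 : 'M[R]_N); have := qfZ M 0 (0 : 'M[R]_N).
  by rewrite scale0r expr0n /= !mul0r => -> ->; rewrite mulr0.
have [Av fv] := scale w sw w0.
have sq0 : 0 < sq w.
  rewrite lt_neqAle sq_ge0 andbT eq_sym; apply/negP => /eqP h.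
  by move/eqP: w0; apply; apply: sq_eq0.
have := cmin _ (mem_set Av); rewrite fv ler_pdivlMr // mulrC.
Qed.
Local Open Scope complex_scope.

Definition cj (z : R[i]) : R[i] := (complex.Re z) -i* (complex.Im z).

Lemma term_eq (P Q : R) (c d z : R[i]) :
  ((P +i* Q) * c) * ((complex.Re (z * d)) -i* (complex.Im (z * d))) =
  cj z * ((P * (complex.Re c * complex.Re d + complex.Im c * complex.Im d)
             - Q * (complex.Im c * complex.Re d - complex.Re c * complex.Im d))%:C
          + 'i * (Q * (complex.Re c * complex.Re d + complex.Im c * complex.Im d)
             + P * (complex.Im c * complex.Re d - complex.Re c * complex.Im d))%:C).
Proof.
case: c => a b; case: d => e f; case: z => x y /=.
apply/eqP; rewrite eq_complex /=; apply/andP; split; apply/eqP; ring.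
Qed.

Lemma sum_cform (I : finType) (f g : I -> R) (w : R[i]) :
  \sum_i w * ((f i)%:C + 'i * (g i)%:C) = w * ((\sum_i f i)%:C + 'i * (\sum_i g i)%:C).
Proof.
by rewrite -mulr_sumr big_split /= -mulr_sumr !rmorph_sum.
Qed.

Local Close Scope complex_scope.

Definition S4 {N : nat} (F : 'I_N -> 'I_N -> 'I_N -> 'I_N -> R) : R :=
  \sum_(i < N) \sum_(j < N) \sum_(k < N) \sum_(l < N) F i j k l.

Lemma S4D {N : nat} (F G : 'I_N -> 'I_N -> 'I_N -> 'I_N -> R) :
  S4 (fun i j k l => F i j k l + G i j k l) = S4 F + S4 G.
Proof.
rewrite /S4 -big_split; apply: eq_bigr => i _; rewrite -big_split; apply: eq_bigr => j _.
rewrite -big_split; apply: eq_bigr => k _; by rewrite -big_split.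
Qed.

Lemma S4Z {N : nat} (c : R) (F : 'I_N -> 'I_N -> 'I_N -> 'I_N -> R) :
  S4 (fun i j k l => c * F i j k l) = c * S4 F.
Proof.
rewrite /S4 mulr_sumr; apply: eq_bigr => i _; rewrite mulr_sumr; apply: eq_bigr => j _.
rewrite mulr_sumr; apply: eq_bigr => k _; by rewrite mulr_sumr.
Qed.

Lemma S4_ext {N : nat} (F G : 'I_N -> 'I_N -> 'I_N -> 'I_N -> R) :
  (forall i j k l, F i j k l = G i j k l) -> S4 F = S4 G.
Proof.
move=> h; rewrite /S4; apply: eq_bigr => i _; apply: eq_bigr => j _.
apply: eq_bigr => k _; apply: eq_bigr => l _; exact: h.
Qed.

Lemma bil_S4 {N : nat} (M : tensor N R) (u v : 'M[R]_N) :
  ddot (tapply M u) v = S4 (fun i j k l => M i j k l * (u k l * v i j)).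
Proof.
rewrite /ddot /S4; apply: eq_bigr => i _; apply: eq_bigr => j _.
rewrite mxE mulr_suml; apply: eq_bigr => k _; rewrite mulr_suml; apply: eq_bigr => l _.
by rewrite mulrA.
Qed.


Lemma cross0 {N : nat} (M : tensor N R) (u v : 'M[R]_N) :
  sym_tensor M -> symmx u -> symmx v ->
  S4 (fun i j k l => M i j k l * (v k l * u i j - u k l * v i j)) = 0.
Proof.
move=> sM su sv.
rewrite (@S4_ext _ _ (fun i j k l => M i j k l * (v k l * u i j) + (-1) * (M i j k l * (u k l * v i j)))); last first.
  by move=> i j k l; ring.
rewrite S4D S4Z -!bil_S4 (sM u v su sv) ddotC; ring.
Qed.

Lemma diag_S4 {N : nat} (M : tensor N R) (u v : 'M[R]_N) :
  S4 (fun i j k l => M i j k l * (u k l * u i j + v k l * v i j)) = qf M u + qf M v.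
Proof.
rewrite /qf !bil_S4 -S4D; apply: S4_ext => i j k l; ring.
Qed.
Local Open Scope complex_scope.
Lemma Q_expand {N : nat} (P Qt : 'I_N -> 'I_N -> 'I_N -> 'I_N -> R) (xi : 'M[R[i]]_N) (z : R[i]) :
  ddot (tapply (fun i j k l => (P i j k l +i* Qt i j k l)) xi) (mxconjC (z *: xi)) =
  cj z * ((S4 (fun i j k l =>
      P i j k l * (complex.Re (xi k l) * complex.Re (xi i j) + complex.Im (xi k l) * complex.Im (xi i j))
      - Qt i j k l * (complex.Im (xi k l) * complex.Re (xi i j) - complex.Re (xi k l) * complex.Im (xi i j))))%:C
    + 'i * (S4 (fun i j k l =>
      Qt i j k l * (complex.Re (xi k l) * complex.Re (xi i j) + complex.Im (xi k l) * complex.Im (xi i j))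
      + P i j k l * (complex.Im (xi k l) * complex.Re (xi i j) - complex.Re (xi k l) * complex.Im (xi i j))))%:C).
Proof.
rewrite /ddot /S4.
under eq_bigr => i _ do under eq_bigr => j _ do rewrite !mxE mulr_suml.
under eq_bigr => i _ do under eq_bigr => j _ do under eq_bigr => k _ do rewrite mulr_suml.
under eq_bigr => i _ do under eq_bigr => j _ do under eq_bigr => k _ do under eq_bigr => l _ do rewrite term_eq.
under eq_bigr => i _ do under eq_bigr => j _ do under eq_bigr => k _ do rewrite sum_cform.
under eq_bigr => i _ do under eq_bigr => j _ do rewrite sum_cform.
under eq_bigr => i _ do rewrite sum_cform.
by rewrite sum_cform.
Qed.
End L.

Local Close Scope classical_set_scope.

Lemma div_le (R : realType) (a b p q : R) : 0 < p -> 0 < q -> a * q <= b * p -> a / p <= b / q.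
Proof. by move=> p0 q0 h; rewrite ler_pdivrMr // mulrAC ler_pdivlMr. Qed.

Lemma fin_ineq (R : realType) (x y g a b n K1 k2 : R) :
  0 < x -> 0 < g -> 0 < K1 -> 0 < k2 -> 0 <= n -> K1 * n <= a - b / g -> k2 * n <= b ->
  let kk := Num.min K1 k2 in let gg := Num.min g 1 in let Mc := 2 * (1 + g ^+ 2) in
  let D := (x + g) ^+ 2 + y ^+ 2 in
  kk * gg / Mc * (x + (x ^+ 2 + y ^+ 2) / (1 + (x ^+ 2 + y ^+ 2))) * n <=
    x * (a - (x + g) / D * b) + y * (y / D * b) /\
  (x * (y / D * b) - y * (a - (x + g) / D * b)) * y <= - (kk * gg / Mc) * y ^+ 2 * n.
Proof.
move=> x0 g0 K0 k0 n0 hK hk kk gg Mc D.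
have kkK : kk <= K1 by rewrite /kk ge_min lexx.
have kkk : kk <= k2 by rewrite /kk ge_min lexx orbT.
have kk0 : 0 < kk by rewrite /kk lt_min K0 k0.
have ggg : gg <= g by rewrite /gg ge_min lexx.
have gg1 : gg <= 1 by rewrite /gg ge_min lexx orbT.
have gg0 : 0 < gg by rewrite /gg lt_min g0 ltr01.
have Mc2 : 2 <= Mc by rewrite /Mc; nra.
have Mc0 : 0 < Mc by lra.
set w := gg / Mc.
have w0 : 0 < w by rewrite /w divr_gt0.
have w2 : w <= 1 / 2.
  rewrite /w; apply: div_le => //; lra.
have D0 : 0 < D by rewrite /D; nra.
have b0 : 0 <= b by nra.
have sD : (x + g) / D <= 1 / g.
  apply: div_le => //; rewrite /D; nra.
have s2D : (2 * x + g) / D <= 1 / g.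
  apply: div_le => //; rewrite /D; nra.
have hA : K1 * n <= a - (x + g) / D * b.
  apply: (le_trans hK); rewrite lerD2l lerN2; apply: (le_trans (ler_wpM2r b0 sD)).
  by rewrite mul1r mulrC.
set nz := x ^+ 2 + y ^+ 2.
have nz0 : 0 <= nz by rewrite /nz; nra.
have hq : w * (nz / (1 + nz)) <= x / 2 + y ^+ 2 / D.
  have i1 : gg * nz <= x * D / 2 + y ^+ 2.
    have : gg * x <= D / 2 by rewrite /D; nra.
    rewrite /nz; nra.
  have i2 : D <= Mc * (1 + nz) by rewrite /D /Mc /nz; nra.
  have -> : x / 2 + y ^+ 2 / D = (x * D / 2 + y ^+ 2) / D by field; rewrite gt_eqF.
  apply: (@le_trans _ _ (gg * nz / D)); last first.
    by apply: ler_wpM2r => //; rewrite invr_ge0 ltW.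
  have -> : w * (nz / (1 + nz)) = (gg * nz) / (Mc * (1 + nz)).
    by rewrite /w; field; apply/andP; split; rewrite gt_eqF //; lra.
  apply: div_le => //; first by apply: mulr_gt0 => //; lra.
  by apply: ler_wpM2l => //; apply: mulr_ge0 => //; apply: ltW.
have -> : kk * gg / Mc = kk * w by rewrite /w mulrA.
have hA2 : K1 * n <= a - (2 * x + g) / D * b.
  apply: (le_trans hK); rewrite lerD2l lerN2; apply: (le_trans (ler_wpM2r b0 s2D)).
  by rewrite mul1r mulrC.
set q := nz / (1 + nz) in hq *.
set t := y ^+ 2 / D in hq *.
have t0 : 0 <= t by rewrite /t divr_ge0 // ?sqr_ge0 // ltW.
split.
- have wx := ler_wpM2r (ltW x0) w2.
  have H1 : w * (x + q) <= x + t by rewrite mulrDr; lra.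
  have -> : y * (y / D * b) = t * b by rewrite /t; ring.
  have e1 : 0 <= x * (a - (x + g) / D * b - K1 * n) by apply: mulr_ge0; lra.
  have e2 : 0 <= x * ((K1 - kk) * n) by apply: mulr_ge0; [lra|apply: mulr_ge0 => //; lra].
  have e3 : 0 <= t * (b - k2 * n) by apply: mulr_ge0 => //; lra.
  have e4 : 0 <= t * ((k2 - kk) * n) by apply: mulr_ge0 => //; apply: mulr_ge0 => //; lra.
  have e5 : 0 <= kk * n * (x + t - w * (x + q)) by apply: mulr_ge0; [apply: mulr_ge0 => //; lra|lra].
  nra.
- have -> : (x * (y / D * b) - y * (a - (x + g) / D * b)) * y = - (y ^+ 2 * (a - (2 * x + g) / D * b)) by ring.
  have kw : kk * w <= K1 by nra.
  have e1 : 0 <= y ^+ 2 * (a - (2 * x + g) / D * b - kk * w * n).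
    apply: mulr_ge0; first exact: sqr_ge0.
    have : kk * w * n <= K1 * n by apply: ler_wpM2r.
    lra.
  nra.
Qed.

Lemma cj_form (R : realType) (z : R[i]) (A B : R) :
  @cj R z * (A%:C + 'i * B%:C)%C = ((complex.Re z * A + complex.Im z * B) +i* (complex.Re z * B - complex.Im z * A))%C.
Proof. case: z => x y; apply/eqP; rewrite eq_complex /=; apply/andP; split; apply/eqP; ring. Qed.

Theorem proposition4p5 (R : realType) (N : nat) (Ah B : tensor N R) (gamma : R) :
  sym_tensor Ah -> sym_tensor B -> pos_tensor Ah -> pos_tensor B ->
  0 < gamma ->
  pos_tensor (fun i j k l => gamma * Ah i j k l - B i j k l) ->
  let S : R -> tensor N R := fun t i j k l => - B i j k l * expR (- gamma * t) in
  exists c : R, 0 < c /\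
    forall (z : R[i]) (xi : 'M[R[i]]_N),
      0 < complex.Re z -> symmx xi ->
      let Q := ddot (tapply (fun i j k l => tensorC Ah i j k l + laplace_tensor S z i j k l) xi)
                    (mxconjC (z *: xi)) in
      let nz2 := complex.Re z ^+ 2 + complex.Im z ^+ 2 in
      c * (complex.Re z + nz2 / (1 + nz2)) * fnorm2 xi <= complex.Re Q /\
      complex.Im Q * complex.Im z <= - c * (complex.Im z) ^+ 2 * fnorm2 xi.
Proof.
move=> sAh sB pAh pB g0 pG S.
have [k1 [k10 hk1]] := @qf_lower R N _ pG.
have [k2 [k20 hk2]] := @qf_lower R N _ pB.
pose K1 := k1 / gamma.
pose kk := Num.min K1 k2.
pose gg := Num.min gamma 1.
pose Mc := 2 * (1 + gamma ^+ 2).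
exists (kk * gg / Mc); split.
  apply: divr_gt0; last by rewrite /Mc; apply: mulr_gt0 => //; apply: addr_gt0 => //; apply: exprn_gt0.
  apply: mulr_gt0; first by rewrite /kk lt_min k20 divr_gt0.
  by rewrite /gg lt_min g0 ltr01.
move=> z xi x0 sxi Q nz2.
set x := complex.Re z; set y := complex.Im z.
pose u := \matrix_(i, j) complex.Re (xi i j).
pose v := \matrix_(i, j) complex.Im (xi i j).
set D := (x + gamma) ^+ 2 + y ^+ 2.
have eT : (fun i j k l => tensorC Ah i j k l + laplace_tensor S z i j k l) =
   (fun i j k l => ((Ah i j k l + (- B i j k l) * ((x + gamma) / D)) +i* ((- B i j k l) * (- y / D)))%C).
  apply/funext => i; apply/funext => j; apply/funext => k; apply/funext => l.
  rewrite /laplace_tensor /S (@laplace_S R) // /tensorC.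
  by apply/eqP; rewrite eq_complex /= add0r !eqxx.
have exi i j : xi j i = xi i j.
  by move: sxi; rewrite /symmx => /matrixP /(_ i j); rewrite mxE.
have su : symmx u.
  apply/matrixP => i j; rewrite !mxE.
  by rewrite exi.
have sv : symmx v.
  apply/matrixP => i j; rewrite !mxE.
  by rewrite exi.
have fn : fnorm2 xi = sq R u + sq R v.
  rewrite /fnorm2 /sq -big_split; apply: eq_bigr => i _; rewrite -big_split; apply: eq_bigr => j _.
  by rewrite !mxE.
set a := qf R Ah u + qf R Ah v.
set b := qf R B u + qf R B v.
have E1 : S4 R (fun i j k l => (Ah i j k l + - B i j k l * ((x + gamma) / D)) * (complex.Re (xi k l) * complex.Re (xi i j) + complex.Im (xi k l) * complex.Im (xi i j)) - - B i j k l * (- y / D) * (complex.Im (xi k l) * complex.Re (xi i j) - complex.Re (xi k l) * complex.Im (xi i j))) = a - (x + gamma) / D * b.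
  rewrite (@S4_ext R N _ (fun i j k l => Ah i j k l * (u k l * u i j + v k l * v i j) +
   ((- ((x + gamma) / D)) * (B i j k l * (u k l * u i j + v k l * v i j)) +
    (- y / D) * (B i j k l * (v k l * u i j - u k l * v i j))))); last first.
    by move=> i j k l /=; rewrite !mxE; ring.
  rewrite !S4D !S4Z !diag_S4 cross0 // -/a -/b; ring.
have E2 : S4 R (fun i j k l => - B i j k l * (- y / D) * (complex.Re (xi k l) * complex.Re (xi i j) + complex.Im (xi k l) * complex.Im (xi i j)) + (Ah i j k l + - B i j k l * ((x + gamma) / D)) * (complex.Im (xi k l) * complex.Re (xi i j) - complex.Re (xi k l) * complex.Im (xi i j))) = y / D * b.
  rewrite (@S4_ext R N _ (fun i j k l => (- (- y / D)) * (B i j k l * (u k l * u i j + v k l * v i j)) +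
   (Ah i j k l * (v k l * u i j - u k l * v i j) +
    (- ((x + gamma) / D)) * (B i j k l * (v k l * u i j - u k l * v i j))))); last first.
    by move=> i j k l /=; rewrite !mxE; ring.
  rewrite !S4D !S4Z !diag_S4 !cross0 // -/a -/b; ring.
have qlin (w : 'M[R]_N) : qf R (fun i j k l => gamma * Ah i j k l - B i j k l) w = gamma * qf R Ah w - qf R B w.
  rewrite /qf !bil_S4 (@S4_ext R N _ (fun i j k l => gamma * (Ah i j k l * (w k l * w i j)) + (-1) * (B i j k l * (w k l * w i j)))); last first.
    by move=> i j k l /=; ring.
  rewrite S4D !S4Z; ring.
have n0 : 0 <= sq R u + sq R v by apply: addr_ge0; apply: sq_ge0.
have hk : k2 * (sq R u + sq R v) <= b.
  by rewrite mulrDr; apply: lerD; apply: hk2.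
have hK : K1 * (sq R u + sq R v) <= a - b / gamma.
  have h1 : k1 * (sq R u + sq R v) <= gamma * a - b.
    rewrite mulrDr; have := hk1 u su; have := hk1 v sv; rewrite !qlin /a /b; lra.
  rewrite /K1 mulrAC ler_pdivrMr // (le_trans h1) //.
  by rewrite mulrBl mulrC divfK // gt_eqF.
rewrite /Q eT Q_expand cj_form /= E1 E2 fn /nz2 -/x -/y.
exact: (@fin_ineq R x y gamma a b (sq R u + sq R v) K1 k2 x0 g0 (divr_gt0 k10 g0) k20 n0 hK hk).
Qed.
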